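(* For all integers $k\ge 3$ and $n\ge 1$, $$r_o(C_k,K_{n,n})\;\le\;2n^3+(k-3)\,n(2n-1)+n^2.$$
   Context: An ordered graph $G$ on $n$ vertices has vertex set $[n]=\{1,\dots,n\}$ with the natural linear order. An ordered graph $G$ on $[n]$ is contained in an ordered graph $H$ on a linearly ordered vertex set if there is an injective map $f$ from $[n]$ to $V(H)$ with $f(i)<f(j)$ whenever $i<j$ and $f(i)f(j)\in E(H)$ whenever $ij\in E(G)$; such an image is an ordered copy of $G$. $C_k$ is the ordered cycle on $[k]$ with edges $\{i,i+1\}$ for $1\le i\le k-1$ together with $\{1,k\}$. $K_{n,n}$ is the ordered complete bipartite graph on $[2n]$ with edge set $\{ij: 1\le i\le n<j\le 2n\}$. The online ordered Ramsey game for $(G_1,G_2)$ is played by Builder and Painter on the vertex set $\mathbb N$ with its natural order. On each turn Builder selects a previously unselected pair of vertices (an edge) and Painter then colors it red or blue. Builder wins as soon as the colored edges contain an ordered red copy of $G_1$ or an ordered blue copy of $G_2$; Builder tries to minimize and Painter tries to maximize the number of turns. The online ordered Ramsey number $r_o(G_1,G_2)$ is the number of turns after which Builder wins when both players play optimally. *)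

(* Defs.v *)
From mathcomp Require Import all_boot.
Set Implicit Arguments. Unset Strict Implicit. Unset Printing Implicit Defensive.

(* A board: list of colored edges (u, v, c) with u < v, vertices in nat
   (with its natural order); c = true means red, c = false means blue. *)
Definition board := seq (nat * nat * bool).

(* An ordered graph on [N] = {1..N}, given by its size and edge relation
   E i j, consulted only for 1 <= i < j <= N. *)
Record ograph := OGraph { og_size : nat; og_edge : nat -> nat -> bool }.

Definition has_copy (G : ograph) (c : bool) (s : board) : Prop :=
  exists f : nat -> nat,
    (forall i j, 1 <= i -> i < j -> j <= og_size G -> f i < f j) /\
    (forall i j, 1 <= i -> i < j -> j <= og_size G -> og_edge G i j ->
        (f i, f j, c) \in s).

Definition cycleG (k : nat) : ograph :=
  OGraph k (fun i j => (j == i.+1) || ((i == 1) && (j == k))).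

Definition KnnG (n : nat) : ograph :=
  OGraph (2 * n) (fun i j => (i <= n) && (n < j)).

Definition builder_won (G1 G2 : ograph) (s : board) : Prop :=
  has_copy G1 true s \/ has_copy G2 false s.

Fixpoint builder_wins_within (G1 G2 : ograph) (m : nat) (s : board) : Prop :=
  builder_won G1 G2 s \/
  match m with
  | 0 => False
  | m'.+1 => exists u v, u < v /\ (forall c, (u, v, c) \notin s) /\
             forall c : bool, builder_wins_within G1 G2 m' ((u, v, c) :: s)
  end.

Definition online_ramsey_le (G1 G2 : ograph) (m : nat) : Prop :=
  builder_wins_within G1 G2 m [::].

(* Main.v *)
Require Import Defs.
From mathcomp Require Import all_boot.
From mathcomp Require Import zify.

Set Implicit Arguments. Unset Strict Implicit. Unset Printing Implicit Defensive.

Notation bww := builder_wins_within.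

Lemma has_copy_mono G c (s s' : board) :
  {subset s <= s'} -> has_copy G c s -> has_copy G c s'.
Proof. by move=> sub [f [H1 H2]]; exists f; split => // i j *; apply/sub/H2. Qed.

Lemma won_mono G1 G2 (s s' : board) :
  {subset s <= s'} -> builder_won G1 G2 s -> builder_won G1 G2 s'.
Proof. by move=> sub [H|H]; [left|right]; apply: has_copy_mono H. Qed.

Lemma wins_won G1 G2 m s : builder_won G1 G2 s -> bww G1 G2 m s.
Proof. by case: m => [|m] H; left. Qed.

Lemma wins_mono_m G1 G2 m m' s : m <= m' -> bww G1 G2 m s -> bww G1 G2 m' s.
Proof.
elim: m m' s => [|m IH] [|m'] s //= Hle.
- by case=> [H|[]]; left.
- case=> [H|[u [v [uv [fr H]]]]]; first by left.
  right; exists u, v; split=> //; split=> // c; exact: IH (H c).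
Qed.

Lemma wins_mono_s G1 G2 m (s s' : board) :
  {subset s <= s'} -> bww G1 G2 m s -> bww G1 G2 m s'.
Proof.
elim: m s s' => [|m IH] s s' sub /=.
- by case=> // H; left; apply: won_mono H.
- case=> [H|[u [v [uv [fr H]]]]]; first by left; apply: won_mono H.
  have [Hc0|none] := boolP [exists c : bool, (u, v, c) \in s'].
  + case/existsP: Hc0 => c0 Hc0.
    have H1 : bww G1 G2 m s'.
      apply: (IH ((u, v, c0) :: s)) (H c0) => e; rewrite inE.
      by case/orP => [/eqP ->|/sub].
    exact: (wins_mono_m (leqnSn m) H1).
  + right; exists u, v; split=> //; split.
      by move=> c; apply/negP => Hc; move/existsP: none; apply; exists c.
    move=> c; apply: IH (H c) => e; rewrite !inE.
    by case/orP => [->|/sub ->]; rewrite ?orbT.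
Qed.

Lemma query G1 G2 m s u v : u < v ->
  (forall c, bww G1 G2 m ((u, v, c) :: s)) -> bww G1 G2 m.+1 s.
Proof.
move=> uv H.
have [Hc0|none] := boolP [exists c : bool, (u, v, c) \in s].
  case/existsP: Hc0 => c0 Hc0.
  apply: (wins_mono_m (leqnSn m)); apply: wins_mono_s (H c0) => e.
  by rewrite inE => /orP [/eqP ->|].
right; exists u, v; split=> //; split=> // c.
by apply/negP => Hc; move/existsP: none; apply; exists c.
Qed.

Lemma scan G1 G2 (src : seq nat) w s mG mR :
  (forall x, x \in src -> x < w) ->
  (forall s', {subset s <= s'} -> (forall x, x \in src -> (x, w, false) \in s') ->
     bww G1 G2 mG s') ->
  (forall s' x, {subset s <= s'} -> x \in src -> (x, w, true) \in s' ->
     bww G1 G2 mR s') ->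
  bww G1 G2 (size src + maxn mG mR) s.
Proof.
elim: src s => [|x src IH] s Hlt HB HR.
  by apply: (wins_mono_m (leq_maxl _ _)); apply: HB.
rewrite [size (_ :: _)]/= addSn; apply: (@query _ _ _ _ x w); first by apply: Hlt; rewrite mem_head.
case.
- apply: (wins_mono_m (leq_trans (leq_maxr _ _) (leq_addl _ _))).
  apply: (HR _ x) => //; first by move=> e He; rewrite inE He orbT.
  + by rewrite inE eqxx.
  + by rewrite inE eqxx.
- apply: IH.
  + by move=> y Hy; apply: Hlt; rewrite inE Hy orbT.
  + move=> s' sub Hb; apply: HB => [e He|y]; first by apply: sub; rewrite inE He orbT.
    rewrite inE => /orP [/eqP ->|/Hb //]; apply: sub; by rewrite inE eqxx.
  + move=> s' y sub Hy Hr; apply: (HR s' y) => //.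
    * by move=> e He; apply: sub; rewrite inE He orbT.
    * by rewrite inE Hy orbT.
Qed.

Lemma scan_all G1 G2 (src tgt : seq nat) s m :
  (forall x y, x \in src -> y \in tgt -> x < y) ->
  (forall s', {subset s <= s'} ->
     (forall x y, x \in src -> y \in tgt -> (x, y, false) \in s') -> bww G1 G2 m s') ->
  (forall s' x y, {subset s <= s'} -> x \in src -> y \in tgt -> (x, y, true) \in s' ->
     builder_won G1 G2 s') ->
  bww G1 G2 (size tgt * size src + m) s.
Proof.
elim: tgt s => [|y tgt IH] s Hlt HB HR.
  by rewrite [size [::]]/= mul0n add0n; apply: HB => // x y _; rewrite in_nil.
rewrite [size (_ :: _)]/= mulSn -addnA -[X in bww _ _ (_ + X)]maxn0.
apply: (@scan _ _ src y).
- by move=> x Hx; apply: Hlt; rewrite ?inE ?eqxx.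
- move=> s1 sub1 Hb1; apply: IH.
  + by move=> x z Hx Hz; apply: Hlt; rewrite ?inE ?Hz ?orbT.
  + move=> s' sub Hb; apply: HB => [e He|x z Hx]; first by apply/sub/sub1.
    rewrite inE => /orP [/eqP ->|Hz]; last exact: Hb.
    exact/sub/Hb1.
  + move=> s' x z sub Hx Hz Hr; apply: (HR s' x z) => //.
    * by move=> e He; apply/sub/sub1.
    * by rewrite inE Hz orbT.
- move=> s' x sub Hx Hr; apply: wins_won; apply: (HR s' x y) => //.
  by rewrite inE eqxx.
Qed.

Lemma sorted_ltn_sort (L : seq nat) : uniq L -> sorted ltn (sort leq L).
Proof.
move=> uL; rewrite ltn_sorted_uniq_leq sort_uniq uL /=.
exact: (sort_sorted leq_total).
Qed.

Lemma knn_win n (L R : seq nat) (s : board) :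
  size L = n -> size R = n -> uniq L -> uniq R ->
  (forall x y, x \in L -> y \in R -> x < y) ->
  (forall x y, x \in L -> y \in R -> (x, y, false) \in s) ->
  has_copy (KnnG n) false s.
Proof.
move=> sL sR uL uR Hlt Hb.
set L' := sort leq L; set R' := sort leq R.
have sL' : size L' = n by rewrite size_sort.
have sR' : size R' = n by rewrite size_sort.
have oL := sorted_ltn_sort uL; have oR := sorted_ltn_sort uR.
have mL i : i < n -> nth 0 L' i \in L.
  by move=> hi; rewrite -(mem_sort leq) mem_nth // sL'.
have mR i : i < n -> nth 0 R' i \in R.
  by move=> hi; rewrite -(mem_sort leq) mem_nth // sR'.
exists (fun i => if i <= n then nth 0 L' i.-1 else nth 0 R' (i - n).-1).
split => /= i j i1 ij jn.
- case: (leqP i n) => hi; case: (leqP j n) => hj.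
  + apply: (sorted_ltn_nth ltn_trans 0 oL); rewrite ?inE ?sL' /=; lia.
  + apply: Hlt; [apply: mL| apply: mR]; lia.
  + lia.
  + apply: (sorted_ltn_nth ltn_trans 0 oR); rewrite ?inE ?sR' /=; lia.
- case/andP => hi hj; rewrite hi leqNgt hj /=.
  apply: Hb; [apply: mL| apply: mR]; lia.
Qed.

Definition redE (s : board) := fun u v => (u < v) && ((u, v, true) \in s).

Lemma cyc_win k a (q : seq nat) (s : board) :
  3 <= k -> size q = k.-1 -> path (redE s) a q -> (a, last a q, true) \in s ->
  has_copy (cycleG k) true s.
Proof.
move=> k3 sq pq Hl.
have oq : sorted ltn (a :: q).
  by rewrite /=; apply: sub_path pq => u v /andP [].
exists (fun i => nth 0 (a :: q) i.-1).
split => /= i j i1 ij jn.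
- apply: (sorted_ltn_nth ltn_trans 0 oq); rewrite ?inE /= ?sq /=; lia.
- case/orP => [/eqP ->|/andP [/eqP -> /eqP ->]].
  + have /(pathP 0) H := pq; rewrite sq in H.
    have /andP [_] : redE s (nth 0 (a :: q) i.-1) (nth 0 q i.-1).
      by apply: H; lia.
    by case: i i1 {ij jn H} => [|i] //=.
  + have -> : k.-1 = (size (a :: q)).-1 by rewrite /= sq.
    by rewrite nth_last.
Qed.

Lemma collect G1 n (BL : seq nat) lo M (s0 : board) :
  size BL = n -> uniq BL -> (forall x, x \in BL -> x < lo) ->
  (forall s Up pos, {subset s0 <= s} -> size Up = n -> uniq Up ->
     (forall w, w \in Up -> lo <= w < pos) -> pos < lo + 2 * n ->
     (forall w, w \in Up -> exists2 x, x \in BL & (x, w, true) \in s) ->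
     bww G1 (KnnG n) M s) ->
  forall d s (Good Up : seq nat) pos, {subset s0 <= s} ->
  d + size Good + size Up = 2 * n - 2 -> size Good < n -> size Up < n ->
  uniq Good -> uniq Up -> pos = lo + size Good + size Up ->
  (forall w, w \in Good -> lo <= w < pos) ->
  (forall w, w \in Up -> lo <= w < pos) ->
  (forall x w, x \in BL -> w \in Good -> (x, w, false) \in s) ->
  (forall w, w \in Up -> exists2 x, x \in BL & (x, w, true) \in s) ->
  bww G1 (KnnG n) (d.+1 * n + M) s.
Proof.
move=> sBL uBL HBL Cont d.
elim/ltn_ind: d => d IH s Good Up pos s0s Hd hG hU uG uU Hpos HG HU Hb Hr.
rewrite mulSn -addnA -[X in bww _ _ (_ + X)]maxnn -[X in bww _ _ (X + _)]sBL.
apply: (@scan _ _ BL pos).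
- move=> x /HBL; lia.
- move=> s' ss' Hb'.
  have uG' : uniq (pos :: Good).
    rewrite /= uG andbT; apply/negP => /HG; lia.
  have HG' : forall w, w \in pos :: Good -> lo <= w < pos.+1.
    move=> w; rewrite inE => /orP [/eqP ->|/HG]; lia.
  have Hb2 : forall x w, x \in BL -> w \in pos :: Good -> (x, w, false) \in s'.
    move=> x w Hx; rewrite inE => /orP [/eqP ->|Hw]; first exact: Hb'.
    exact/ss'/Hb.
  case: (ltnP (size Good).+1 n) => hg.
  + case: d IH Hd => [|d] IH Hd; first lia.
    apply: (IH d (ltnSn d) s' (pos :: Good) Up pos.+1) => //=.
    * by move=> e /s0s /ss'.
    * lia.
    * lia.
    * move=> w /HU; lia.
    * move=> w /Hr [x Hx Hxw]; exists x => //; exact: ss'.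
  + apply: wins_won; right.
    apply: (knn_win (L := BL) (R := pos :: Good)) => //=.
    * lia.
    * move=> x y /HBL hx /HG'; lia.
- move=> s' x ss' Hx Hxr.
  have uU' : uniq (pos :: Up).
    rewrite /= uU andbT; apply/negP => /HU; lia.
  have HU' : forall w, w \in pos :: Up -> lo <= w < pos.+1.
    move=> w; rewrite inE => /orP [/eqP ->|/HU]; lia.
  have Hr2 : forall w, w \in pos :: Up -> exists2 x, x \in BL & (x, w, true) \in s'.
    move=> w; rewrite inE => /orP [/eqP ->|/Hr [y Hy Hyw]]; first by exists x.
    by exists y => //; apply: ss'.
  case: (ltnP (size Up).+1 n) => hu.
  + case: d IH Hd => [|d] IH Hd; first lia.
    apply: (IH d (ltnSn d) s' Good (pos :: Up) pos.+1) => //=.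
    * by move=> e /s0s /ss'.
    * lia.
    * lia.
    * move=> w /HG; lia.
    * move=> y w Hy Hw; exact/ss'/Hb.
  + apply: (wins_mono_m (leq_addl _ _)).
    apply: (Cont s' (pos :: Up) pos.+1) => //=.
    * by move=> e /s0s /ss'.
    * lia.
    * lia.
Qed.

Lemma path_mono (s s' : board) a q :
  {subset s <= s'} -> path (redE s) a q -> path (redE s') a q.
Proof.
move=> ss'; apply: sub_path => u v /andP [H1 H]; rewrite /redE H1 /=; exact: ss'.
Qed.

Lemma endgame k n : 3 <= k -> 1 <= n -> forall r s a (BL BR : seq nat) pos,
  r <= k - 3 ->
  size BL = n -> uniq BL -> size BR = n -> uniq BR ->
  (forall x, x \in BL -> exists q, [/\ path (redE s) a q, size q = k.-2 - r & last a q = x]) ->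
  (forall x, x \in BL -> x < pos) ->
  (forall y, y \in BR -> pos + r * (2 * n) <= y) ->
  (forall y, y \in BR -> (a, y, true) \in s) ->
  bww (cycleG k) (KnnG n) (r * (n * (2 * n - 1)) + n * n) s.
Proof.
move=> k3 n1; elim=> [|r IH] s a BL BR pos rk sBL uBL sBR uBR HP Hpos HBR Ha.
- rewrite mul0n add0n -[X in bww _ _ X]addn0 -[X in bww _ _ (X * _ + _)]sBR -[X in bww _ _ (_ * X + _)]sBL.
  apply: scan_all.
  + move=> x y /Hpos hx /HBR; lia.
  + move=> s' ss' Hb; apply: wins_won; right.
    apply: (knn_win (L := BL) (R := BR)) => // x y /Hpos hx /HBR; lia.
  + move=> s' x y ss' Hx Hy Hxy; left.
    case: (HP x Hx) => q [pq sq lq].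
    apply: (@cyc_win k a (rcons q y)) => //.
    * rewrite size_rcons sq; lia.
    * rewrite rcons_path (path_mono ss' pq) /= /redE lq Hxy andbT.
      by have := Hpos x Hx; have := HBR y Hy; lia.
    * by rewrite last_rcons; apply: ss'; apply: Ha.
- have -> : r.+1 * (n * (2 * n - 1)) + n * n =
            (2 * n - 2).+1 * n + (r * (n * (2 * n - 1)) + n * n) by nia.
  apply: (@collect _ n BL pos _ s _ _ _ _ (2 * n - 2) s [::] [::] pos) => //.
  + move=> s' Up pos' ss' sUp uUp HUp Hpos' Hr.
    apply: (IH s' a Up BR pos') => //.
    * lia.
    * move=> w Hw; case: (Hr w Hw) => x Hx Hxw.
      case: (HP x Hx) => q [pq sq lq].
      exists (rcons q w); split.
      -- rewrite rcons_path (path_mono ss' pq) /= /redE lq Hxw andbT.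
         by have := Hpos x Hx; have := HUp w Hw; lia.
      -- rewrite size_rcons sq; lia.
      -- by rewrite last_rcons.
    * by move=> w /HUp; lia.
    * by move=> y /HBR; lia.
    * by move=> y /Ha; apply: ss'.
  + by rewrite /= !addn0.
  + by rewrite /= !addn0.
Qed.

Lemma sum_bound n (f : nat -> nat) c :
  (forall j, j < n -> f j <= c) -> \sum_(j < n) f j <= n * c.
Proof.
move=> H; apply: (@leq_trans (\sum_(j < n) c)).
  by apply: leq_sum => j _; apply: H.
by rewrite sum_nat_const card_ord.
Qed.

Lemma sum_upd n (f g : nat -> nat) x : x < n -> g x = (f x).+1 ->
  (forall j, j != x -> g j = f j) -> \sum_(j < n) g j = (\sum_(j < n) f j).+1.
Proof.
move=> hx Hx Ho.
rewrite (bigD1 (Ordinal hx)) //= [in RHS](bigD1 (Ordinal hx)) //= Hx addSn.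
congr (_.+1 + _); apply: eq_bigr => j /= hj; apply: Ho.
by apply: contra hj => /eqP hj; apply/eqP/val_inj.
Qed.

Definition gapG k n := k * (2 * n) + n + 1.

Lemma gapG_gt k n : n < gapG k n.
Proof. rewrite /gapG; lia. Qed.

Lemma outer k n : 3 <= k -> 1 <= n ->
 forall d s (Good : seq nat) (Bs : nat -> seq nat),
  d + size Good + \sum_(j < n) size (Bs j) = 2 * n * n - 1 ->
  size Good < n -> (forall j, j < n -> size (Bs j) < 2 * n) ->
  uniq Good ->
  (forall w, w \in Good -> gapG k n <= w /\ w + gapG k n <= gapG k n * (2 * n * n - d)) ->
  (forall x w, x < n -> w \in Good -> (x, w, false) \in s) ->
  (forall j, j < n -> pairwise (fun y x => x + gapG k n <= y) (Bs j)) ->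
  (forall j y, j < n -> y \in Bs j ->
     [/\ gapG k n <= y, y + gapG k n <= gapG k n * (2 * n * n - d) & (j, y, true) \in s]) ->
  bww (cycleG k) (KnnG n) (d.+1 * n + ((k - 3) * (n * (2 * n - 1)) + n * n)) s.
Proof.
move=> k3 n1.
have nG := gapG_gt k n.
have G1 : 0 < gapG k n by lia.
set G := gapG k n in nG G1 *.
set E := (k - 3) * (n * (2 * n - 1)) + n * n.
elim/ltn_ind => d IH s Good Bs Hd hG hB uG HG Hb pB HB.
have Sb' : \sum_(j < n) size (Bs j) <= n * (2 * n - 1).
  apply: (@sum_bound n (fun j => size (Bs j))) => j hj; have := hB j hj; lia.
have hd : d < 2 * n * n by nia.
set pos := G * (2 * n * n - d).
have Gpos : G <= pos by rewrite /pos leq_pmulr //; lia.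
have posS : forall d', d = d'.+1 -> G * (2 * n * n - d') = pos + G.
  move=> d' hd'; rewrite /pos hd' -mulnSr; congr (G * _); lia.
rewrite mulSn -addnA -[X in bww _ _ (_ + X)]maxnn -[X in bww _ _ (X + _)](size_iota 0 n).
have Hiota : forall x, x \in iota 0 n -> x < n by move=> x; rewrite mem_iota; lia.
apply: (@scan _ _ (iota 0 n) pos).
- by move=> x /Hiota; lia.
- move=> s' ss' Hb'.
  have uG' : uniq (pos :: Good).
    by rewrite /= uG andbT; apply/negP => /HG; lia.
  case: (ltnP (size Good).+1 n) => hg.
  + have [d' ed] : exists d', d = d'.+1.
      have d1 : 0 < d by nia.
      by exists d.-1; rewrite prednK.
    have Hd' : d' < d by rewrite ed.
    have -> : d * n + E = d'.+1 * n + E by rewrite ed.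
    apply: (IH d' Hd' s' (pos :: Good) Bs) => //=.
    * by rewrite addnS -addSn -ed.
    * move=> w; rewrite inE (posS d' ed) => /orP [/eqP ->|/HG]; lia.
    * move=> x w hx; rewrite inE => /orP [/eqP ->|Hw]; first by apply: Hb'; rewrite mem_iota; lia.
      exact/ss'/Hb.
    * move=> j y hj Hy; case: (HB j y hj Hy) => h1 h2 h3; split => //.
      -- rewrite (posS d' ed); lia.
      -- exact: ss'.
  + apply: wins_won; right.
    apply: (knn_win (L := iota 0 n) (R := pos :: Good)) => //=.
    * by rewrite size_iota.
    * lia.
    * exact: iota_uniq.
    * move=> x y /Hiota hx; rewrite inE => /orP [/eqP ->|/HG]; lia.
    * move=> x y Hx; rewrite inE => /orP [/eqP ->|Hy]; first exact: Hb'.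
      apply/ss'/Hb => //; exact: Hiota.
- move=> s' x ss' Hx Hxr.
  have hx := Hiota x Hx.
  set l := pos :: Bs x.
  have pl : pairwise (fun y x => x + G <= y) l.
    rewrite /l /= pB // andbT; apply/allP => y Hy.
    by case: (HB x y hx Hy).
  have Hl : forall y, y \in l -> [/\ G <= y, y + G <= pos + G & (x, y, true) \in s'].
    move=> y; rewrite inE => /orP [/eqP ->|Hy]; first by split => //; lia.
    case: (HB x y hx Hy) => h1 h2 h3; split => //; [lia | exact: ss'].
  case: (ltnP (size (Bs x)).+1 (2 * n)) => hb.
  + set Bs' := fun j => if j == x then pos :: Bs j else Bs j.
    have Hsum : \sum_(j < n) size (Bs' j) = (\sum_(j < n) size (Bs j)).+1.
      apply: (@sum_upd n (fun j => size (Bs j)) (fun j => size (Bs' j)) x hx).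
        by rewrite /Bs' eqxx.
      by move=> j /negbTE hj; rewrite /Bs' hj.
    have hB' : forall j, j < n -> size (Bs' j) < 2 * n.
      by move=> j hj; rewrite /Bs'; case: eqP => [->|_] //=; apply: hB.
    have Sb2 : \sum_(j < n) size (Bs' j) <= n * (2 * n - 1).
      apply: (@sum_bound n (fun j => size (Bs' j))) => j hj; have := hB' j hj; lia.
    have [d' ed] : exists d', d = d'.+1.
      have d1 : 0 < d by nia.
      by exists d.-1; rewrite prednK.
    have Hd' : d' < d by rewrite ed.
    have -> : d * n + E = d'.+1 * n + E by rewrite ed.
    apply: (IH d' Hd' s' Good Bs') => //.
    * lia.
    * move=> w /HG; rewrite (posS d' ed); lia.
    * move=> y w hy Hw; exact/ss'/Hb.
    * move=> j hj; rewrite /Bs'; case: eqP => [->|_]; [exact: pl | exact: pB].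
    * move=> j y hj; rewrite /Bs' (posS d' ed); case: eqP => [->|_] Hy.
      -- rewrite inE in Hy; case/orP: Hy => [/eqP ->|Hy]; first by split => //; lia.
         case: (HB x y hx Hy) => h1 h2 h3; split => //; [lia | exact: ss'].
      -- case: (HB j y hj Hy) => h1 h2 h3; split => //; [lia | exact: ss'].
  + apply: (wins_mono_m (leq_addl _ _)).
    have sl : size l = 2 * n by have := hB x hx; rewrite /l /=; lia.
    have ul : uniq l.
      by apply: (pairwise_uniq _ pl) => y /=; apply/negbTE/negP; lia.
    set BR := take n l; set BL := drop n l.
    have ar : allrel (fun y x => x + G <= y) BR BL.
      by move: pl; rewrite -(cat_take_drop n l) pairwise_cat => /andP [].
    have mBR : forall y, y \in BR -> y \in l by move=> y /mem_take.
    have mBL : forall y, y \in BL -> y \in l by move=> y /mem_drop.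
    set pos0 := (\max_(z <- BL) z).+1.
    apply: (@endgame k n k3 n1 (k - 3) s' x BL BR pos0) => //.
    * by rewrite size_drop sl; lia.
    * exact: drop_uniq.
    * by rewrite size_takel // sl; lia.
    * exact: take_uniq.
    * move=> z Hz; exists [:: z]; split => //=; last lia.
      case: (Hl z (mBL z Hz)) => h1 h2 h3.
      by rewrite /redE h3 andbT; lia.
    * move=> z Hz; rewrite /pos0 ltnS; exact: (@leq_bigmax_seq _ _ (fun _ => true) (fun z => z) z Hz).
    * move=> y Hy.
      have : \max_(z <- BL) z <= y - G.
        apply/bigmax_leqP_seq => z Hz _.
        by have := allrelP ar y z Hy Hz; lia.
      have := Hl y (mBR y Hy); case => h1 _ _.
      have hA : (k - 3) * (2 * n) <= k * (2 * n) := leq_mul (leq_subr 3 k) (leqnn _).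
      move: hA h1; rewrite /pos0 /G /gapG.
      set A := (k - 3) * (2 * n); set B := k * (2 * n); set M := \max_(z <- BL) z.
      lia.
    * by move=> y /mBR /Hl [].
Qed.

Theorem theorem4 (k n : nat) : 3 <= k -> 1 <= n ->
  online_ramsey_le (cycleG k) (KnnG n)
    (2 * n ^ 3 + (k - 3) * (n * (2 * n - 1)) + n ^ 2).
Proof.
move=> k3 n1; rewrite /online_ramsey_le.
have -> : 2 * n ^ 3 + (k - 3) * (n * (2 * n - 1)) + n ^ 2 =
          (2 * n * n - 1).+1 * n + ((k - 3) * (n * (2 * n - 1)) + n * n).
  have -> : n ^ 3 = n * n * n by rewrite !expnS expn0 muln1 mulnA.
  have -> : n ^ 2 = n * n by rewrite !expnS expn0 muln1.
  have h2 : 0 < 2 * n * n by rewrite !muln_gt0 n1.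
  have -> : (2 * n * n - 1).+1 = 2 * n * n by lia.
  rewrite !mulnA; lia.
apply: (@outer k n k3 n1 (2 * n * n - 1) [::] [::] (fun _ => [::])) => //.
- by rewrite big1 // !addn0.
- by move=> j _ /=; lia.
Qed.
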